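(* For $p>2$, the function $L_\alpha$ is strictly convex on $[z_p,1)$.
   Context: $p=\alpha(\alpha+1)$, $\alpha>0$; $L_\alpha$ is the solution on $(-1,1)$ of $(1-x^2)y''-2xy'+py=0$ bounded near $1$ with $L_\alpha(1)=1$, and $z_p$ is its largest zero in $(-1,1)$. *)

(* Defs.v *)
From Stdlib Require Import Reals Lra.
Open Scope R_scope.

Definition legendre_p (alpha : R) : R := alpha * (alpha + 1).

Definition solves_legendre (p : R) (f : R -> R) : Prop :=
  exists f1 f2 : R -> R,
    forall x, -1 < x < 1 ->
      derivable_pt_lim f x (f1 x) /\
      derivable_pt_lim f1 x (f2 x) /\
      (1 - x ^ 2) * f2 x - 2 * x * f1 x + p * f x = 0.

Definition bounded_near_1 (f : R -> R) : Prop :=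
  exists M delta, 0 < delta /\ forall x, 1 - delta < x < 1 -> Rabs (f x) <= M.

(* L(1) = 1, understood as the (left) limit of f at 1 being 1 *)
Definition value_at_1 (f : R -> R) (v : R) : Prop :=
  forall eps, 0 < eps -> exists delta, 0 < delta /\
    forall x, 1 - delta < x < 1 -> Rabs (f x - v) < eps.

Definition is_L (alpha : R) (f : R -> R) : Prop :=
  solves_legendre (legendre_p alpha) f /\ bounded_near_1 f /\ value_at_1 f 1.

Definition largest_zero (f : R -> R) (z : R) : Prop :=
  -1 < z < 1 /\ f z = 0 /\ forall x, z < x < 1 -> f x <> 0.

Definition strictly_convex_on_Ico (f : R -> R) (a b : R) : Prop :=
  forall x y t, a <= x -> x < y -> y < b -> 0 < t < 1 ->
    f (t * x + (1 - t) * y) < t * f x + (1 - t) * f y.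

(* Main.v *)
Require Import Defs.
From Stdlib Require Import Reals Lra Psatz Ranalysis5.
Open Scope R_scope.

Lemma d_omx2 (x : R) : derivable_pt_lim (fun x => 1 - x ^ 2) x (- 2 * x).
Proof.
  assert (H := derivable_pt_lim_minus _ _ x _ _ (derivable_pt_lim_const 1 x)
                 (derivable_pt_lim_pow x 2)).
  replace (- 2 * x) with (0 - INR 2 * x ^ (2 - 1)); [exact H|].
  simpl. ring.
Qed.

Lemma d_g (p : R) (f f1 f2 : R -> R) x :
  derivable_pt_lim f1 x (f2 x) ->
  (1 - x ^ 2) * f2 x - 2 * x * f1 x + p * f x = 0 ->
  derivable_pt_lim (fun y => (1 - y ^ 2) * f1 y) x (- p * f x).
Proof.
  intros H1 E.
  assert (H := derivable_pt_lim_mult _ _ x _ _ (d_omx2 x) H1).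
  replace (- p * f x) with (- 2 * x * f1 x + (1 - x ^ 2) * f2 x) by lra.
  exact H.
Qed.

Lemma d_H (p : R) (f f1 f2 : R -> R) x :
  derivable_pt_lim f x (f1 x) ->
  derivable_pt_lim f1 x (f2 x) ->
  (1 - x ^ 2) * f2 x - 2 * x * f1 x + p * f x = 0 ->
  derivable_pt_lim (fun y => (1 - y ^ 2) * (2 * y * f1 y - p * f y)) x
     ((2 - p) * (1 - x ^ 2) * f1 x).
Proof.
  intros H0 H1 E.
  assert (A : derivable_pt_lim (fun y => 2 * y) x 2).
  { assert (B := derivable_pt_lim_scal id 2 x 1 (derivable_pt_lim_id x)).
    rewrite Rmult_1_r in B. exact B. }
  assert (B := derivable_pt_lim_mult _ _ x _ _ A H1).
  assert (C := derivable_pt_lim_scal f p x _ H0).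
  assert (D := derivable_pt_lim_minus _ _ x _ _ B C).
  assert (F := derivable_pt_lim_mult _ _ x _ _ (d_omx2 x) D).
  replace ((2 - p) * (1 - x ^ 2) * f1 x) with
   (- 2 * x * ((2 * x * f1 x) - (p * f x)) +
    (1 - x ^ 2) * ((2 * f1 x + 2 * x * f2 x) - p * f1 x)).
  2:{ replace ((1 - x ^ 2) * (2 * f1 x + 2 * x * f2 x - p * f1 x)) with
       ((1 - x ^ 2) * (2 - p) * f1 x + 2 * x * ((1 - x ^ 2) * f2 x)) by ring.
      replace ((1 - x ^ 2) * f2 x) with (2 * x * f1 x - p * f x) by lra. ring. }
  exact F.
Qed.

Lemma d_h (f f1 : R -> R) c x : x < 1 ->
  derivable_pt_lim f x (f1 x) ->
  derivable_pt_lim (fun y => f y + c / 2 * ln (1 - y)) x (f1 x - c / (2 * (1 - x))).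
Proof.
  intros Hx H0.
  assert (A : derivable_pt_lim (fun y => 1 - y) x (0 - 1)).
  { exact (derivable_pt_lim_minus _ _ x _ _ (derivable_pt_lim_const 1 x) (derivable_pt_lim_id x)). }
  assert (B := derivable_pt_lim_comp _ ln x _ _ A (derivable_pt_lim_ln (1 - x) ltac:(lra))).
  assert (C := derivable_pt_lim_scal _ (c / 2) x _ B).
  assert (D := derivable_pt_lim_plus _ _ x _ _ H0 C).
  replace (f1 x - c / (2 * (1 - x))) with (f1 x + c / 2 * (/ (1 - x) * (0 - 1))).
  - exact D.
  - field. lra.
Qed.

Theorem lemma7p2 (alpha : R) (f : R -> R) (z : R) :
  0 < alpha -> 2 < legendre_p alpha ->
  is_L alpha f -> largest_zero f z ->
  strictly_convex_on_Ico f z 1.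
Proof.
  intros Ha Hp [[f1 [f2 HS]] [_ HV]] [Hz [Hfz Hnz]].
  set (p := legendre_p alpha) in *.
  assert (Df : forall x, -1 < x < 1 -> derivable_pt_lim f x (f1 x)) by (intros; apply HS; auto).
  assert (Df1 : forall x, -1 < x < 1 -> derivable_pt_lim f1 x (f2 x)) by (intros; apply HS; auto).
  assert (Eq : forall x, -1 < x < 1 -> (1 - x ^ 2) * f2 x - 2 * x * f1 x + p * f x = 0)
    by (intros; apply HS; auto).
  assert (Pos : forall x, z < x < 1 -> 0 < f x).
  { intros x Hx. destruct (Rtotal_order (f x) 0) as [Hn|[He|Hq]]; [|exfalso; apply (Hnz x Hx He)|exact Hq].
    exfalso. destruct (HV (1/2) ltac:(lra)) as [d [Hd Hd']].
    set (y := (Rmax x (1 - d) + 1) / 2).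
    assert (Hy1 : x < y < 1) by (unfold y; pose proof (Rmax_l x (1-d)); pose proof (Rmax_r x (1-d)); unfold Rmax in *; destruct (Rle_dec x (1-d)); lra).
    assert (Hy2 : 1 - d < y) by (unfold y; pose proof (Rmax_l x (1-d)); pose proof (Rmax_r x (1-d)); unfold Rmax in *; destruct (Rle_dec x (1-d)); lra).
    assert (Hfy : 0 < f y) by (pose proof (Hd' y ltac:(lra)) as Q; apply Rabs_def2 in Q; lra).
    destruct (IVT_interv f x y) as [w [Hw1 Hw2]]; try lra.
    + intros a Ha'. apply derivable_continuous_pt. exists (f1 a). apply Df. lra.
    + apply (Hnz w); [lra | exact Hw2]. }
  assert (Hp0 : 0 < p) by lra.
  set (g := fun y => (1 - y ^ 2) * f1 y).
  assert (Gdec : forall a b, z < a -> a < b -> b < 1 -> g b < g a).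
  { intros a b H1 H2 H3.
    destruct (MVT_cor2 g (fun y => - p * f y) a b H2) as [c [Hc1 Hc2]].
    - intros c Hc. unfold g. apply (d_g p f f1 f2). apply Df1; lra. apply Eq; lra.
    - pose proof (Pos c ltac:(lra)) as Pc. simpl in Hc1. assert (0 < p * f c * (b - a)) by (apply Rmult_lt_0_compat; [apply Rmult_lt_0_compat|]; lra). lra. }
  assert (Gnn : forall x0, z < x0 < 1 -> 0 <= g x0).
  { intros x0 Hx0. destruct (Rle_or_lt 0 (g x0)) as [Q|Q]; [exact Q|exfalso].
    set (c := g x0) in *.
    set (h := fun y => f y + c / 2 * ln (1 - y)).
    assert (Hh : forall x, x0 < x < 1 -> h x <= h x0).
    { intros x Hx.
      destruct (MVT_cor2 h (fun y => f1 y - c / (2 * (1 - y))) x0 x ltac:(lra)) as [xi [Hxi1 Hxi2]].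
      - intros y Hy. apply d_h. lra. apply Df; lra.
      - assert (Gxi : g xi < c) by (apply Gdec; lra).
        unfold g in Gxi.
        assert (f1 xi - c / (2 * (1 - xi)) <= 0).
        { assert (Hf1 : f1 xi < 0).
          { destruct (Rle_or_lt 0 (f1 xi)); [|auto]. exfalso.
            assert (0 <= (1 - xi ^ 2) * f1 xi) by (apply Rmult_le_pos; nra). lra. }
          assert (2 * (1 - xi) * f1 xi <= c) by nra.
          assert (f1 xi <= c / (2 * (1 - xi))).
          { apply (Rmult_le_reg_r (2 * (1 - xi))). lra.
            unfold Rdiv. rewrite Rmult_assoc, Rinv_l by lra. lra. }
          lra. }
        nra. }
    destruct (HV (1/2) ltac:(lra)) as [d [Hd Hd']].
    set (K := h x0).
    set (M := Rmax (Rmax (/ (1 - x0)) (/ d)) (Rmax (2 * (K - 1/2) / (- c)) 1) + 1).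
    assert (HM1 : / (1 - x0) < M /\ / d < M /\ 2 * (K - 1/2) / (- c) < M /\ 1 < M).
    { unfold M. pose proof (Rmax_l (Rmax (/ (1 - x0)) (/ d)) (Rmax (2 * (K - 1/2) / (- c)) 1)).
      pose proof (Rmax_r (Rmax (/ (1 - x0)) (/ d)) (Rmax (2 * (K - 1/2) / (- c)) 1)).
      pose proof (Rmax_l (/ (1 - x0)) (/ d)). pose proof (Rmax_r (/ (1 - x0)) (/ d)).
      pose proof (Rmax_l (2 * (K - 1/2) / (- c)) 1). pose proof (Rmax_r (2 * (K - 1/2) / (- c)) 1).
      lra. }
    destruct HM1 as [HM1 [HM2 [HM3 HM4]]].
    set (x := 1 - exp (- M)).
    assert (He : exp (- M) < / M).
    { rewrite exp_Ropp. pose proof (exp_pos M). apply Rinv_lt_contravar. apply Rmult_lt_0_compat; lra.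
      pose proof (exp_ineq1 M ltac:(lra)). lra. }
    assert (Hepos : 0 < exp (- M)) by apply exp_pos.
    assert (E1 : exp (- M) < 1 - x0).
    { assert (/ M < 1 - x0); [|lra].
      rewrite <- (Rinv_inv (1 - x0)). apply Rinv_lt_contravar; [|lra].
      apply Rmult_lt_0_compat; [apply Rinv_0_lt_compat; lra|lra]. }
    assert (E2 : exp (- M) < d).
    { assert (/ M < d); [|lra].
      rewrite <- (Rinv_inv d). apply Rinv_lt_contravar; [|lra].
      apply Rmult_lt_0_compat; [apply Rinv_0_lt_compat; lra|lra]. }
    assert (Hx : x0 < x < 1) by (unfold x; lra).
    assert (Hfx : 1/2 < f x) by (pose proof (Hd' x ltac:(unfold x; lra)) as W; apply Rabs_def2 in W; lra).
    pose proof (Hh x Hx) as W. unfold h in W. fold K in W.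
    assert (Ln : ln (1 - x) = - M) by (unfold x; replace (1 - (1 - exp (- M))) with (exp (- M)) by ring; apply ln_exp).
    rewrite Ln in W.
    assert (2 * (K - 1/2) < M * (- c)).
    { apply (Rmult_lt_compat_r (- c)) in HM3; [|lra].
      unfold Rdiv in HM3. rewrite Rmult_assoc, Rinv_l in HM3 by lra. lra. }
    assert (c / 2 * - M = M * (- c) / 2) by field. unfold K, h in H. clearbody M x c. lra. }
  assert (F1pos : forall x, z < x < 1 -> 0 < f1 x).
  { intros x Hx. assert (0 < g x).
    { pose proof (Gdec x ((x + 1) / 2) ltac:(lra) ltac:(lra) ltac:(lra)).
      pose proof (Gnn ((x + 1) / 2) ltac:(lra)). lra. }
    unfold g in H. destruct (Rle_or_lt (f1 x) 0); [|auto]. exfalso.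
    assert (0 < 1 - x ^ 2) by nra. nra. }
  set (HH := fun y => (1 - y ^ 2) * (2 * y * f1 y - p * f y)).
  assert (Hdec : forall a b, z < a -> a < b -> b < 1 -> HH b < HH a).
  { intros a b H1 H2 H3.
    destruct (MVT_cor2 HH (fun y => (2 - p) * (1 - y ^ 2) * f1 y) a b H2) as [c [Hc1 Hc2]].
    - intros c Hc. unfold HH. apply (d_H p f f1 f2). apply Df; lra. apply Df1; lra. apply Eq; lra.
    - pose proof (F1pos c ltac:(lra)) as Pc. simpl in Hc1.
      assert (0 < 1 - c ^ 2) by nra.
      assert (0 < (p - 2) * (1 - c ^ 2) * f1 c * (b - a)) by
        (repeat apply Rmult_lt_0_compat; lra). nra. }
  assert (Hnn : forall x0, z < x0 < 1 -> 0 <= HH x0).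
  { intros x0 Hx0. destruct (Rle_or_lt 0 (HH x0)) as [Q|Q]; [exact Q|exfalso].
    set (c := HH x0) in *.
    destruct (HV 1 ltac:(lra)) as [d [Hd Hd']].
    set (m := Rmax (Rmax x0 0) (Rmax (1 - d) (1 + c / (4 * p)))).
    assert (Hm : x0 <= m /\ 0 <= m /\ 1 - d <= m /\ 1 + c / (4 * p) <= m).
    { unfold m. pose proof (Rmax_l (Rmax x0 0) (Rmax (1 - d) (1 + c / (4 * p)))).
      pose proof (Rmax_r (Rmax x0 0) (Rmax (1 - d) (1 + c / (4 * p)))).
      pose proof (Rmax_l x0 0). pose proof (Rmax_r x0 0).
      pose proof (Rmax_l (1 - d) (1 + c / (4 * p))). pose proof (Rmax_r (1 - d) (1 + c / (4 * p))). lra. }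
    destruct Hm as [Hm_1 [Hm_2 [Hm_3 Hm_4]]].
    assert (Hm1 : m < 1).
    { unfold m. apply Rmax_lub_lt; apply Rmax_lub_lt; try lra.
      assert (c / (4 * p) < 0); [|lra].
      unfold Rdiv. apply Rmult_neg_pos; [lra|]. apply Rinv_0_lt_compat; lra. }
    set (y := (m + 1) / 2).
    assert (Hyd : y = (m + 1) / 2) by reflexivity.
    assert (Hy : x0 < y < 1) by (unfold y; lra).
    pose proof (Hdec x0 y ltac:(lra) ltac:(lra) ltac:(lra)) as D. fold c in D.
    pose proof (Gnn y ltac:(lra)) as Gy. unfold g in Gy.
    pose proof (Pos y ltac:(lra)) as Py.
    assert (Fy : f y < 2) by (pose proof (Hd' y ltac:(unfold y; lra)) as W; apply Rabs_def2 in W; lra).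
    assert (Hy2 : 4 * p * (1 - y) < - c).
    { assert (1 - y < - c / (4 * p)).
      { assert (1 + c / (4 * p) < y) by (unfold y; lra). unfold Rdiv in *. lra. }
      apply (Rmult_lt_compat_l (4 * p)) in H; [|lra].
      unfold Rdiv in H. replace (4 * p * (- c * / (4 * p))) with (- c) in H by (field; lra). lra. }
    assert (HHy : HH y = 2 * y * ((1 - y ^ 2) * f1 y) - p * ((1 - y ^ 2) * f y)) by (unfold HH; ring).
    assert (0 <= 2 * y * ((1 - y ^ 2) * f1 y)) by (apply Rmult_le_pos; lra).
    assert ((1 + y) * f y <= 4) by nra.
    assert ((1 - y ^ 2) * f y <= 4 * (1 - y)).
    { replace ((1 - y ^ 2) * f y) with ((1 - y) * ((1 + y) * f y)) by ring.
      replace (4 * (1 - y)) with ((1 - y) * 4) by ring.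
      apply Rmult_le_compat_l; lra. }
    assert (p * ((1 - y ^ 2) * f y) <= p * (4 * (1 - y))) by (apply Rmult_le_compat_l; lra).
    clearbody c y. lra. }
  assert (F2pos : forall x, z < x < 1 -> 0 < f2 x).
  { intros x Hx. assert (0 < HH x).
    { pose proof (Hdec x ((x + 1) / 2) ltac:(lra) ltac:(lra) ltac:(lra)).
      pose proof (Hnn ((x + 1) / 2) ltac:(lra)). lra. }
    unfold HH in H. pose proof (Eq x ltac:(lra)).
    assert (0 < 1 - x ^ 2) by nra.
    assert (HE : 2 * x * f1 x - p * f x = (1 - x ^ 2) * f2 x) by lra.
    rewrite HE in H.
    destruct (Rle_or_lt (f2 x) 0); [|auto]. exfalso.
    assert ((1 - x ^ 2) * f2 x <= 0) by (replace 0 with ((1 - x ^ 2) * 0) by ring; apply Rmult_le_compat_l; lra).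
    assert ((1 - x ^ 2) * ((1 - x ^ 2) * f2 x) <= 0) by (replace 0 with ((1 - x ^ 2) * 0) by ring; apply Rmult_le_compat_l; lra).
    lra. }
  assert (F1inc : forall a b, z <= a -> a < b -> b < 1 -> f1 a < f1 b).
  { intros a b H1 H2 H3.
    destruct (MVT_cor2 f1 f2 a b H2) as [c [Hc1 Hc2]].
    - intros c Hc. apply Df1; lra.
    - pose proof (F2pos c ltac:(lra)). nra. }
  intros x y t Hx Hxy Hy Ht.
  set (w := t * x + (1 - t) * y).
  assert (Hw : x < w < y) by (unfold w; nra).
  destruct (MVT_cor2 f f1 x w ltac:(lra)) as [c1 [E1 Hc1]].
  { intros c Hc. apply Df; lra. }
  destruct (MVT_cor2 f f1 w y ltac:(lra)) as [c2 [E2 Hc2]].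
  { intros c Hc. apply Df; lra. }
  pose proof (F1inc c1 c2 ltac:(lra) ltac:(lra) ltac:(lra)).
  assert (w - x = (1 - t) * (y - x)) by (unfold w; ring).
  assert (y - w = t * (y - x)) by (unfold w; ring).
  assert (t * f x + (1 - t) * f y - f w = t * (1 - t) * (y - x) * (f1 c2 - f1 c1)) by
    (replace (f x) with (f w - f1 c1 * (w - x)) by lra;
     replace (f y) with (f w + f1 c2 * (y - w)) by lra; nra).
  assert (0 < t * (1 - t) * (y - x) * (f1 c2 - f1 c1)) by (repeat apply Rmult_lt_0_compat; lra).
  lra.
Qed.
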